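(* Let $M\in\mathbb{R}_+^{m\times n}$ be a matrix with nonnegative entries and let $k\ge 1$ be an integer. Consider the problem $$\min_{U\in\mathbb{R}_+^{m\times k},\,V\in\mathbb{R}_+^{n\times k}}\ \left\|M-UV^\top\right\|_F .$$ If an optimal solution to this problem exists, then there exists at least one global optimal solution $(U,V)$ satisfying $$U_{i,l}\le \sqrt{2\|M\|_F}\quad\text{and}\quad V_{j,l}\le\sqrt{2\|M\|_F}\qquad\text{for all } i\in\{1,\dots,m\},\ j\in\{1,\dots,n\},\ l\in\{1,\dots,k\}.$$
   Context: $\mathbb{R}_+^{p\times q}$ denotes the set of $p\times q$ real matrices with nonnegative entries; $\|X\|_F=(\sum_{ij}X_{ij}^2)^{1/2}$ is the Frobenius norm; $U_{i,l}$ denotes the $(i,l)$ entry of $U$. *)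

(* Defs.v *)
From HB Require Import structures.
From mathcomp Require Import all_boot all_order all_algebra.
From mathcomp Require Import reals.
Set Implicit Arguments. Unset Strict Implicit. Unset Printing Implicit Defensive.
Import Order.TTheory GRing.Theory Num.Theory.
Local Open Scope ring_scope.

Definition frob (R : realType) (p q : nat) (X : 'M[R]_(p, q)) : R :=
  Num.sqrt (\sum_(i < p) \sum_(j < q) X i j ^+ 2).

Definition nonneg_mx (R : realType) (p q : nat) (X : 'M[R]_(p, q)) : Prop :=
  forall i j, 0 <= X i j.

Definition nmf_obj (R : realType) (m n k : nat) (M : 'M[R]_(m, n))
  (U : 'M[R]_(m, k)) (V : 'M[R]_(n, k)) : R :=
  frob (M - U *m V^T).

Definition nmf_optimal (R : realType) (m n k : nat) (M : 'M[R]_(m, n))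
  (U : 'M[R]_(m, k)) (V : 'M[R]_(n, k)) : Prop :=
  nonneg_mx U /\ nonneg_mx V /\
  forall (U' : 'M[R]_(m, k)) (V' : 'M[R]_(n, k)),
    nonneg_mx U' -> nonneg_mx V' -> nmf_obj M U V <= nmf_obj M U' V'.

(* Main.v *)
Require Import Defs.
From HB Require Import structures.
From mathcomp Require Import all_boot all_order all_algebra.
From mathcomp Require Import reals.
From mathcomp Require Import ring lra.
Import Order.TTheory GRing.Theory Num.Theory.
Local Open Scope ring_scope.

Lemma entry_le_frob (R : realType) (p q : nat) (X : 'M[R]_(p, q)) i j :
  `|X i j| <= frob X.
Proof.
rewrite /frob -sqrtr_sqr; apply: ler_wsqrtr.
rewrite (bigD1 i) //= (bigD1 j) //= -addrA lerDl addr_ge0 //.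
  by apply: sumr_ge0 => *; exact: sqr_ge0.
by apply: sumr_ge0 => *; apply: sumr_ge0 => *; exact: sqr_ge0.
Qed.

Lemma bigmax_att (R : realType) (p : nat) (f : 'I_p -> R) :
  (forall i, 0 <= f i) ->
  \big[Order.max/0]_(i < p) f i = 0 \/ exists i, \big[Order.max/0]_(i < p) f i = f i.
Proof.
case: p f => [|p] f H; first by left; rewrite big_ord0.
right; have [i0 _ ->] := @eq_bigmax _ R _ 0 ord0 xpredT f isT (fun i _ => H i).
by exists i0.
Qed.

Lemma bound_aux (R : realType) (x a b c : R) :
  0 <= x -> x <= a -> 0 <= b -> a * b <= c ->
  x * (Num.sqrt b / Num.sqrt a) <= Num.sqrt c.
Proof.
move=> x0 xa b0 abc.
have a0 : 0 <= a by apply: le_trans xa.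
have [a00|an0] := eqVneq a 0.
  have -> : x = 0 by apply/le_anti; rewrite x0 -a00 xa.
  by rewrite mul0r sqrtr_ge0.
have sa : Num.sqrt a != 0 by rewrite gt_eqF // sqrtr_gt0 lt0r an0.
apply: (@le_trans _ _ (a * (Num.sqrt b / Num.sqrt a))).
  by apply: ler_wpM2r => //; rewrite divr_ge0 ?sqrtr_ge0.
have -> : a * (Num.sqrt b / Num.sqrt a) = Num.sqrt a * Num.sqrt b.
  rewrite -{1}(sqr_sqrtr a0); field; exact: sa.
by rewrite -sqrtrM //; apply: ler_wsqrtr.
Qed.

Lemma prod_aux (R : realType) (x y a b : R) :
  0 <= x -> x <= a -> 0 <= y -> y <= b ->
  x * (Num.sqrt b / Num.sqrt a) * (y * (Num.sqrt a / Num.sqrt b)) = x * y.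
Proof.
move=> x0 xa y0 yb.
have [a0|an0] := eqVneq a 0.
  have -> : x = 0 by apply/le_anti; rewrite x0 -a0 xa.
  by rewrite !mul0r.
have [b0|bn0] := eqVneq b 0.
  have -> : y = 0 by apply/le_anti; rewrite y0 -b0 yb.
  by rewrite !(mul0r, mulr0).
have sa : Num.sqrt a != 0 by rewrite gt_eqF // sqrtr_gt0 lt0r an0 (le_trans x0).
have sb : Num.sqrt b != 0 by rewrite gt_eqF // sqrtr_gt0 lt0r bn0 (le_trans y0).
by field; rewrite sa sb.
Qed.

Theorem lemma1 (R : realType) (m n k : nat) (M : 'M[R]_(m, n)) :
  nonneg_mx M -> (1 <= k)%N ->
  (exists (U0 : 'M[R]_(m, k)) (V0 : 'M[R]_(n, k)), nmf_optimal M U0 V0) ->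
  exists (U : 'M[R]_(m, k)) (V : 'M[R]_(n, k)),
    nmf_optimal M U V /\
    (forall i l, U i l <= Num.sqrt (2 * frob M)) /\
    (forall j l, V j l <= Num.sqrt (2 * frob M)).
Proof.
move=> M0 _ [U0 [V0 [U00 [V00 opt]]]].
set W := U0 *m V0^T.
have W2 : forall i j, W i j <= 2 * frob M.
  move=> i j.
  have h : nmf_obj M U0 V0 <= nmf_obj M (0 : 'M[R]_(m,k)) (0 : 'M[R]_(n,k)).
    by apply: opt => ? ?; rewrite mxE.
  rewrite /nmf_obj mul0mx subr0 in h.
  have e1 := @entry_le_frob _ _ _ (M - W) i j.
  have e2 := @entry_le_frob _ _ _ M i j.
  rewrite [(M - W) i j]mxE [(- W) i j]mxE in e1.
  have e3 := le_trans e1 h.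
  move: e3; rewrite ler_norml => /andP[e3 _].
  have e4 : M i j <= frob M by apply: le_trans e2; exact: ler_norm.
  rewrite -/W in e3.
  lra.
have P2 : forall i j l, U0 i l * V0 j l <= W i j.
  move=> i j l; rewrite /W mxE (bigD1 l) //= mxE lerDl.
  by apply: sumr_ge0 => l' _; rewrite mxE mulr_ge0.
pose a := fun l => \big[Order.max/0]_(i < m) U0 i l.
pose b := fun l => \big[Order.max/0]_(j < n) V0 j l.
have Ua : forall i l, U0 i l <= a l by move=> i l; rewrite /a; exact: (le_bigmax _ (fun i => U0 i l) i).
have Vb : forall j l, V0 j l <= b l by move=> j l; rewrite /b; exact: (le_bigmax _ (fun j => V0 j l) j).
have a0 : forall l, 0 <= a l by move=> l; exact: bigmax_ge_id.
have b0 : forall l, 0 <= b l by move=> l; exact: bigmax_ge_id.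
have F0 : 0 <= frob M by exact: sqrtr_ge0.
have ab : forall l, a l * b l <= 2 * frob M.
  move=> l; rewrite /a /b.
  have [->|[i ->]] := @bigmax_att R m (fun i => U0 i l) (fun i => U00 i l).
    by rewrite mul0r mulr_ge0.
  have [->|[j ->]] := @bigmax_att R n (fun j => V0 j l) (fun j => V00 j l).
    by rewrite mulr0 mulr_ge0.
  exact: le_trans (P2 i j l) (W2 i j).
pose s := fun l => Num.sqrt (b l) / Num.sqrt (a l).
pose t := fun l => Num.sqrt (a l) / Num.sqrt (b l).
exists (\matrix_(i, l) (U0 i l * s l)), (\matrix_(j, l) (V0 j l * t l)).
have EW : (\matrix_(i, l) (U0 i l * s l)) *m (\matrix_(j, l) (V0 j l * t l))^T = W.
  apply/matrixP => i j; rewrite /W !mxE; apply: eq_bigr => l _.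
  rewrite !mxE; exact: prod_aux.
split; last split.
- split; [|split].
  + by move=> i l; rewrite mxE mulr_ge0 // divr_ge0 // sqrtr_ge0.
  + by move=> j l; rewrite mxE mulr_ge0 // divr_ge0 // sqrtr_ge0.
  + by move=> U' V' hU hV; rewrite /nmf_obj EW; exact: opt.
- by move=> i l; rewrite mxE; apply: bound_aux.
- move=> j l; rewrite mxE; apply: bound_aux => //; by rewrite mulrC.
Qed.
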